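(* For a nonnegative integer $t$, we have that $$\mathrm{HC}_1(H_t) = \Theta\left( \left(\frac{(k-1)^3 + 3(k-1)}{k^2 + 1}\right)^t \right).$$
   Context: Fix an integer $k\ge 2$ and a $k$-uniform hypergraph $H_0$. The Iterated Local Transitivity Hypergraph (ILTH) model forms $H_{t+1}$ from $H_t$ as follows: for each vertex $x\in V(H_t)$ add a new vertex $x'$ (the clone of $x$), and for every hyperedge $e$ of $H_t$ and every $x\in e$ add the hyperedge $e-x+x' = (e\setminus\{x\})\cup\{x'\}$; all hyperedges of $H_t$ are kept. A path of length two in a hypergraph is a 5-tuple $(u,e_1,v,e_2,w)$ where $u,v,w$ are distinct vertices, $e_1,e_2$ are distinct hyperedges, $u,v\in e_1$ and $v,w\in e_2$. A hypertriangle is a 6-tuple $(u,e_1,v,e_2,w,e_3)$ with $u,v,w$ distinct vertices, $e_1,e_2,e_3$ distinct hyperedges, and $u,v\in e_1$, $v,w\in e_2$, $w,u\in e_3$. The clustering coefficient is $\mathrm{HC}_1(H) = \frac{6\times(\text{number of hypertriangles in } H)}{\text{number of paths of length two in } H}$. The constants in $\Theta$ depend on $k$ and $H_0$. *)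

(* Defs.v *)
From mathcomp Require Import all_boot all_order all_algebra.
From mathcomp Require Import finmap.
Set Implicit Arguments. Unset Strict Implicit. Unset Printing Implicit Defensive.
Import Order.TTheory GRing.Theory Num.Theory.
Local Open Scope fset_scope.

(* A hypergraph: vertex set {0, ..., nv-1} and a finite set of hyperedges,
   each hyperedge being a finite set of vertices. *)
Record hgraph := HGraph { nv : nat; edges : {fset {fset nat}} }.

Definition uniform (k : nat) (H : hgraph) : Prop :=
  forall e, e \in edges H -> #|` e| = k /\ (forall x, x \in e -> (x < nv H)%N).

(* One ILTH step: the clone of vertex x is x + nv H (a fresh vertex);
   for each hyperedge e and x in e add e - x + x'; keep the old hyperedges. *)
Definition clone_edges (H : hgraph) : seq {fset nat} :=
  [seq (e `\ x) `|` [fset (x + nv H)%N] | e <- enum_fset (edges H), x <- enum_fset e].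

Definition ilth_step (H : hgraph) : hgraph :=
  HGraph (nv H + nv H) (edges H `|` [fset e in clone_edges H]).

Definition ilth (H0 : hgraph) (t : nat) : hgraph := iter t ilth_step H0.

Definition verts (H : hgraph) : seq nat := iota 0 (nv H).
Definition hedges (H : hgraph) : seq {fset nat} := enum_fset (edges H).

Definition npaths2 (H : hgraph) : nat :=
  \sum_(u <- verts H) \sum_(e1 <- hedges H) \sum_(v <- verts H)
   \sum_(e2 <- hedges H) \sum_(w <- verts H)
    nat_of_bool [&& uniq [:: u; v; w], e1 != e2,
                    (u \in e1) && (v \in e1) & (v \in e2) && (w \in e2)].

Definition ntriangles (H : hgraph) : nat :=
  \sum_(u <- verts H) \sum_(e1 <- hedges H) \sum_(v <- verts H)
   \sum_(e2 <- hedges H) \sum_(w <- verts H) \sum_(e3 <- hedges H)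
    nat_of_bool [&& uniq [:: u; v; w], uniq [:: e1; e2; e3],
                    (u \in e1) && (v \in e1), (v \in e2) && (w \in e2)
                  & (w \in e3) && (u \in e3)].

Definition HC1 (H : hgraph) : rat :=
  ((6 * ntriangles H)%:R / (npaths2 H)%:R)%R.

(* Main.v *)
Require Import Defs.
From mathcomp Require Import all_boot all_order all_algebra.
From mathcomp Require Import finmap.
From mathcomp Require Import zify ring.
Set Implicit Arguments. Unset Strict Implicit. Unset Printing Implicit Defensive.

Lemma move2_1 (P Q C : Type) (rp : seq P) (rq : seq Q) (rc : seq C) (F : P -> Q -> C -> nat) :
  \sum_(p <- rp) \sum_(q <- rq) \sum_(c <- rc) F p q c =
  \sum_(c <- rc) \sum_(p <- rp) \sum_(q <- rq) F p q c.
Proof.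
under eq_bigr => p _ do rewrite exchange_big.
by rewrite exchange_big.
Qed.


Section Reorder.
Variables (A B C D : Type) (X : seq A) (Bs : seq B) (Es : seq C) (O : C -> seq D).

Lemma move2 (P Q : Type) (rp : seq P) (rq : seq Q) (F : P -> Q -> C -> D -> nat) :
  \sum_(p <- rp) \sum_(q <- rq) \sum_(c <- Es) \sum_(d <- O c) F p q c d =
  \sum_(c <- Es) \sum_(d <- O c) \sum_(p <- rp) \sum_(q <- rq) F p q c d.
Proof.
under eq_bigr => p _ do rewrite exchange_big.
under eq_bigr => p _ do under eq_bigr => c _ do rewrite exchange_big.
rewrite exchange_big.
by under eq_bigr => c _ do rewrite exchange_big.
Qed.

Lemma move2' (P Q R : Type) (rp : seq P) (rq : seq Q) (rr : seq R) (F : P -> Q -> A -> R -> nat) :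
  \sum_(p <- rp) \sum_(q <- rq) \sum_(c <- X) \sum_(d <- rr) F p q c d =
  \sum_(c <- X) \sum_(d <- rr) \sum_(p <- rp) \sum_(q <- rq) F p q c d.
Proof.
under eq_bigr => p _ do rewrite exchange_big.
under eq_bigr => p _ do under eq_bigr => c _ do rewrite exchange_big.
rewrite exchange_big.
by under eq_bigr => c _ do rewrite exchange_big.
Qed.

Lemma reorder12 (F : A -> B -> C -> D -> A -> B -> C -> D -> A -> B -> C -> D -> nat) :
  \sum_(x <- X) \sum_(bx <- Bs) \sum_(f1 <- Es) \sum_(o1 <- O f1)
  \sum_(y <- X) \sum_(by_ <- Bs) \sum_(f2 <- Es) \sum_(o2 <- O f2)
  \sum_(z <- X) \sum_(bz <- Bs) \sum_(f3 <- Es) \sum_(o3 <- O f3)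
    F x bx f1 o1 y by_ f2 o2 z bz f3 o3 =
  \sum_(x <- X) \sum_(f1 <- Es) \sum_(y <- X) \sum_(f2 <- Es) \sum_(z <- X) \sum_(f3 <- Es)
  \sum_(bx <- Bs) \sum_(o1 <- O f1) \sum_(by_ <- Bs) \sum_(o2 <- O f2)
  \sum_(bz <- Bs) \sum_(o3 <- O f3)
    F x bx f1 o1 y by_ f2 o2 z bz f3 o3.
Proof.
apply: eq_bigr => x _.
rewrite exchange_big /=.
apply: eq_bigr => f1 _.
transitivity (\sum_(bx <- Bs) \sum_(o1 <- O f1) \sum_(y <- X) \sum_(f2 <- Es)
  \sum_(z <- X) \sum_(f3 <- Es) \sum_(by_ <- Bs) \sum_(o2 <- O f2)
  \sum_(bz <- Bs) \sum_(o3 <- O f3)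
    F x bx f1 o1 y by_ f2 o2 z bz f3 o3).
  apply: eq_bigr => bx _; apply: eq_bigr => o1 _; apply: eq_bigr => y _.
  rewrite exchange_big /=; apply: eq_bigr => f2 _.
  transitivity (\sum_(by_ <- Bs) \sum_(o2 <- O f2) \sum_(z <- X) \sum_(f3 <- Es)
    \sum_(bz <- Bs) \sum_(o3 <- O f3) F x bx f1 o1 y by_ f2 o2 z bz f3 o3).
    apply: eq_bigr => by_ _; apply: eq_bigr => o2 _; apply: eq_bigr => z _.
    exact: exchange_big.
  by rewrite move2'.
rewrite move2'. apply: eq_bigr => y _. apply: eq_bigr => f2 _.
by rewrite move2'.
Qed.

Lemma reorder10 (F : A -> B -> C -> D -> A -> B -> C -> D -> A -> B -> nat) :
  \sum_(x <- X) \sum_(bx <- Bs) \sum_(f1 <- Es) \sum_(o1 <- O f1)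
  \sum_(y <- X) \sum_(by_ <- Bs) \sum_(f2 <- Es) \sum_(o2 <- O f2)
  \sum_(z <- X) \sum_(bz <- Bs)
    F x bx f1 o1 y by_ f2 o2 z bz =
  \sum_(x <- X) \sum_(f1 <- Es) \sum_(y <- X) \sum_(f2 <- Es) \sum_(z <- X)
  \sum_(bx <- Bs) \sum_(o1 <- O f1) \sum_(by_ <- Bs) \sum_(o2 <- O f2)
  \sum_(bz <- Bs)
    F x bx f1 o1 y by_ f2 o2 z bz.
Proof.
apply: eq_bigr => x _.
rewrite exchange_big /=.
apply: eq_bigr => f1 _.
transitivity (\sum_(bx <- Bs) \sum_(o1 <- O f1) \sum_(y <- X) \sum_(f2 <- Es)
  \sum_(z <- X) \sum_(by_ <- Bs) \sum_(o2 <- O f2)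
  \sum_(bz <- Bs) F x bx f1 o1 y by_ f2 o2 z bz).
  apply: eq_bigr => bx _; apply: eq_bigr => o1 _; apply: eq_bigr => y _.
  rewrite exchange_big /=; apply: eq_bigr => f2 _.
  by rewrite move2_1.
rewrite move2'. apply: eq_bigr => y _. apply: eq_bigr => f2 _.
by rewrite move2_1.
Qed.

Lemma reorder8 (F : A -> B -> C -> D -> A -> B -> C -> D -> nat) :
  \sum_(x <- X) \sum_(bx <- Bs) \sum_(f1 <- Es) \sum_(o1 <- O f1)
  \sum_(y <- X) \sum_(by_ <- Bs) \sum_(f2 <- Es) \sum_(o2 <- O f2)
    F x bx f1 o1 y by_ f2 o2 =
  \sum_(x <- X) \sum_(f1 <- Es) \sum_(y <- X) \sum_(f2 <- Es)
  \sum_(bx <- Bs) \sum_(o1 <- O f1) \sum_(by_ <- Bs) \sum_(o2 <- O f2)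
    F x bx f1 o1 y by_ f2 o2.
Proof.
apply: eq_bigr => x _.
rewrite exchange_big /=.
apply: eq_bigr => f1 _.
transitivity (\sum_(bx <- Bs) \sum_(o1 <- O f1) \sum_(y <- X) \sum_(f2 <- Es)
  \sum_(by_ <- Bs) \sum_(o2 <- O f2) F x bx f1 o1 y by_ f2 o2).
  apply: eq_bigr => bx _; apply: eq_bigr => o1 _; apply: eq_bigr => y _.
  by rewrite exchange_big.
by rewrite move2'.
Qed.
End Reorder.
Lemma sumb_count (T : Type) (s : seq T) (P : pred T) :
  \sum_(i <- s) nat_of_bool (P i) = count P s.
Proof. elim: s => [|a s IH]; by rewrite ?big_nil ?big_cons ?IH. Qed.

Lemma sum_const_le (T : Type) (s : seq T) (F : T -> nat) c :
  (forall i, F i <= c) -> \sum_(i <- s) F i <= size s * c.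
Proof.
move=> H; elim: s => [|a s IH]; rewrite ?big_nil ?big_cons //=.
by rewrite mulSn leq_add.
Qed.

Lemma sum_eq1_le (T : eqType) (s : seq T) (a : T) c :
  uniq s -> \sum_(i <- s) (i == a) * c <= c.
Proof.
move=> Us. rewrite -big_distrl /= sumb_count.
have := count_uniq_mem a Us. 
rewrite (_ : count (fun i => i == a) s = count_mem a s); last first.
  by apply: eq_count => i /=.
move=> ->. by case: (a \in s); rewrite ?mul1n ?mul0n.
Qed.

Lemma leq_sum_term (T : eqType) (s : seq T) (a : T) (F : T -> nat) :
  a \in s -> F a <= \sum_(i <- s) F i.
Proof.
elim: s => [|b s IH] //=; rewrite inE big_cons => /orP [/eqP ->|H].
  exact: leq_addr.
by apply: leq_trans (IH H) _; apply: leq_addl.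
Qed.

Lemma count_in_le (T : eqType) (s t : seq T) :
  uniq s -> \sum_(y <- s) nat_of_bool (y \in t) <= size t.
Proof.
move=> Us; rewrite sumb_count -size_filter.
apply: uniq_leq_size; first exact: filter_uniq.
by move=> y; rewrite mem_filter => /andP [].
Qed.
Lemma prod3 (D : Type) (O1 O2 O3 : seq D) (h1 h2 h3 : D -> nat) :
  \sum_(o1 <- O1) \sum_(o2 <- O2) \sum_(o3 <- O3) (h1 o1 * h2 o2 * h3 o3) =
  (\sum_(o1 <- O1) h1 o1) * (\sum_(o2 <- O2) h2 o2) * (\sum_(o3 <- O3) h3 o3).
Proof.
rewrite -mulnA big_distrl; apply: eq_bigr => o1 _ /=.
rewrite big_distrl big_distrr; apply: eq_bigr => o2 _ /=.
rewrite big_distrr big_distrr; apply: eq_bigr => o3 _ /=.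
by rewrite mulnA.
Qed.

Lemma prod2 (D : Type) (O1 O2 : seq D) (h1 h2 : D -> nat) :
  \sum_(o1 <- O1) \sum_(o2 <- O2) (h1 o1 * h2 o2) =
  (\sum_(o1 <- O1) h1 o1) * (\sum_(o2 <- O2) h2 o2).
Proof.
rewrite big_distrl; apply: eq_bigr => o1 _ /=.
by rewrite big_distrr.
Qed.

Lemma factor3 (B D : Type) (Bs : seq B) (O1 O2 O3 : seq D) (g1 g2 g3 : B -> B -> D -> nat) :
  \sum_(bx <- Bs) \sum_(o1 <- O1) \sum_(by_ <- Bs) \sum_(o2 <- O2) \sum_(bz <- Bs) \sum_(o3 <- O3)
    (g1 bx by_ o1 * g2 by_ bz o2 * g3 bz bx o3) =
  \sum_(bx <- Bs) \sum_(by_ <- Bs) \sum_(bz <- Bs)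
    (\sum_(o1 <- O1) g1 bx by_ o1) * (\sum_(o2 <- O2) g2 by_ bz o2) * (\sum_(o3 <- O3) g3 bz bx o3).
Proof.
apply: eq_bigr => bx _; rewrite exchange_big; apply: eq_bigr => by_ _.
rewrite move2_1; apply: eq_bigr => bz _.
exact: prod3.
Qed.

Lemma factor2 (B D : Type) (Bs : seq B) (O1 O2 : seq D) (g1 g2 : B -> B -> D -> nat) :
  \sum_(bx <- Bs) \sum_(o1 <- O1) \sum_(by_ <- Bs) \sum_(o2 <- O2) \sum_(bz <- Bs)
    (g1 bx by_ o1 * g2 by_ bz o2) =
  \sum_(bx <- Bs) \sum_(by_ <- Bs) \sum_(bz <- Bs)
    (\sum_(o1 <- O1) g1 bx by_ o1) * (\sum_(o2 <- O2) g2 by_ bz o2).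
Proof.
apply: eq_bigr => bx _; rewrite exchange_big; apply: eq_bigr => by_ _.
under eq_bigr => o1 _ do rewrite exchange_big.
rewrite exchange_big; apply: eq_bigr => bz _.
exact: prod2.
Qed.

Lemma factorS (B D : Type) (Bs : seq B) (O1 O2 : seq D) (g1 g2 : B -> B -> D -> nat) :
  \sum_(bx <- Bs) \sum_(o1 <- O1) \sum_(by_ <- Bs) \sum_(o2 <- O2)
    (g1 bx by_ o1 * g2 bx by_ o2) =
  \sum_(bx <- Bs) \sum_(by_ <- Bs)
    (\sum_(o1 <- O1) g1 bx by_ o1) * (\sum_(o2 <- O2) g2 bx by_ o2).
Proof.
apply: eq_bigr => bx _; rewrite exchange_big; apply: eq_bigr => by_ _.
exact: prod2.
Qed.

Lemma nb01 (b : bool) : (nat_of_bool b == 1) = false -> nat_of_bool b = 0.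
Proof. by case: b. Qed.

Lemma eq_leq_trans (a b c : nat) : a = b -> b <= c -> a <= c.
Proof. by move=> ->. Qed.

Lemma leq_nb (P Q : bool) : (P -> Q) -> nat_of_bool P <= nat_of_bool Q.
Proof. by case: P; case: Q => // /(_ isT). Qed.

Lemma leq_sum_in (T : eqType) (s : seq T) (F G : T -> nat) :
  (forall i, i \in s -> F i <= G i) -> \sum_(i <- s) F i <= \sum_(i <- s) G i.
Proof. by move=> H; rewrite big_seq [X in _ <= X]big_seq; apply: leq_sum. Qed.

Lemma eq_sum_in (T : eqType) (s : seq T) (F G : T -> nat) :
  (forall i, i \in s -> F i = G i) -> \sum_(i <- s) F i = \sum_(i <- s) G i.
Proof. by move=> H; rewrite big_seq [X in _ = X]big_seq; apply: eq_bigr. Qed.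

Lemma sum_const (T : Type) (s : seq T) c : \sum_(i <- s) c = size s * c.
Proof. by elim: s => [|a s IH]; rewrite ?big_nil ?big_cons ?IH ?mulSn. Qed.

Lemma uniq3_lift (T U : eqType) (x y z : T) (a b c : U) :
  uniq [:: x; y; z] -> uniq [:: (x, a); (y, b); (z, c)].
Proof.
rewrite /= !inE !negb_or => /andP [/andP [xy xz] /andP [yz _]].
by rewrite !xpair_eqE (negbTE xy) (negbTE xz) (negbTE yz).
Qed.

Section Gen.
Variables (V E : eqType).
Definition tri (vs : seq V) (es : seq E) (mem : V -> E -> bool) : nat :=
  \sum_(u <- vs) \sum_(e1 <- es) \sum_(v <- vs)
   \sum_(e2 <- es) \sum_(w <- vs) \sum_(e3 <- es)
    nat_of_bool [&& uniq [:: u; v; w], uniq [:: e1; e2; e3],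
                    (mem u e1) && (mem v e1), (mem v e2) && (mem w e2)
                  & (mem w e3) && (mem u e3)].
Definition pth (vs : seq V) (es : seq E) (mem : V -> E -> bool) : nat :=
  \sum_(u <- vs) \sum_(e1 <- es) \sum_(v <- vs)
   \sum_(e2 <- es) \sum_(w <- vs)
    nat_of_bool [&& uniq [:: u; v; w], e1 != e2,
                    (mem u e1) && (mem v e1) & (mem v e2) && (mem w e2)].
Definition sq (vs : seq V) (es : seq E) (mem : V -> E -> bool) : nat :=
  \sum_(x <- vs) \sum_(f <- es) \sum_(y <- vs) \sum_(g <- es)
    nat_of_bool [&& x != y, mem x f && mem y f & mem x g && mem y g].
End Gen.

Section Hyp.
Variables (V E : eqType) (k : nat).
Variables (vs : seq V) (es : seq E) (opts : E -> seq V).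
Hypotheses (Hvs : uniq vs) (Hes : uniq es).
Hypothesis Hopt : forall f, f \in es ->
  [/\ uniq (opts f), size (opts f) = k & {subset opts f <= vs}].

Definition mem0 x f := x \in opts f.
Definition bools := [:: false; true].
Definition os f : seq (option V) := None :: map Some (opts f).
Definition liftv := [seq (x, b) | x <- vs, b <- bools].
Definition lifte := [seq (f, o) | f <- es, o <- os f].
Definition memL (u : V * bool) (e : E * option V) :=
  if u.2 then e.2 == Some u.1 else (u.1 \in opts e.1) && (e.2 != Some u.1).

Lemma memL_mem x b f o : memL (x, b) (f, o) -> o \in os f -> mem0 x f.
Proof.
rewrite /memL /mem0 /os /=; case: b => [/eqP ->|/andP [] //].
by rewrite inE /= mem_map //; apply: Some_inj.
Qed.

Lemma memL_same x b c f o : memL (x, b) (f, o) -> memL (x, c) (f, o) -> b = c.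
Proof.
rewrite /memL /=; case: b; case: c => //=.
  by move=> /eqP -> /andP [_]; rewrite eqxx.
by move=> /andP [_ /negP H] /eqP E0; case: H; rewrite E0.
Qed.

Lemma eqSome (a b : V) : (Some a == Some b) = (a == b).
Proof. by apply/eqP/eqP => [[]|->]. Qed.

Definition Mtab (b c : bool) : nat :=
  if b then (if c then 0 else 1) else (if c then 1 else (k - 2).+1).

Lemma Mcount f x y b c : f \in es -> x != y -> mem0 x f -> mem0 y f ->
  \sum_(o <- os f) nat_of_bool (memL (x, b) (f, o) && memL (y, c) (f, o)) = Mtab b c.
Proof.
move=> /Hopt [U S _] xy; rewrite /mem0 => Hx Hy.
rewrite /os big_cons big_map sumb_count /memL /=.
under eq_count => z do rewrite !eqSome.
rewrite Hx Hy /=.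
case: b; case: c => /=.
- rewrite add0n; apply/eqP; rewrite -leqn0 leqNgt -has_count; apply/hasP => [[z _]] /=.
  by move=> /andP [/eqP -> /eqP E0]; move/eqP: xy.
- rewrite add0n (eq_count (a2 := pred1 x)); first by rewrite count_uniq_mem ?Hx.
  move=> z /=; case: eqP => [->|] //=.
- rewrite add0n (eq_count (a2 := pred1 y)); first by rewrite count_uniq_mem ?Hy.
  move=> z /=; case: (z =P y) => [->|] /=; last by rewrite andbF.
  by rewrite andbT; apply/eqP => E0; move/eqP: xy; rewrite E0.
- rewrite add1n; congr (_.+1).
  rewrite (eq_count (a2 := predC (predU (pred1 x) (pred1 y)))); last first.
    by move=> z /=; rewrite negb_or.
  have := count_predC (predU (pred1 x) (pred1 y)) (opts f).
  have := count_predUI (pred1 x) (pred1 y) (opts f).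
  rewrite !count_uniq_mem ?Hx ?Hy // S.
  have -> : count (predI (pred1 x) (pred1 y)) (opts f) = 0.
    apply/eqP; rewrite -leqn0 leqNgt -has_count; apply/hasP => [[z _]] /=.
    by move=> /andP [/eqP -> /eqP E0]; move/eqP: xy.
  lia.
Qed.

Lemma sum_lv (F : V * bool -> nat) :
  \sum_(u <- liftv) F u = \sum_(x <- vs) \sum_(b <- bools) F (x, b).
Proof. exact: big_allpairs_dep. Qed.

Lemma sum_le (F : E * option V -> nat) :
  \sum_(e <- lifte) F e = \sum_(f <- es) \sum_(o <- os f) F (f, o).
Proof. exact: big_allpairs_dep. Qed.

Definition IT x bx f1 o1 y by_ f2 o2 z bz f3 o3 : nat :=
  nat_of_bool [&& uniq [:: (x, bx); (y, by_); (z, bz)],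
     uniq [:: (f1, o1); (f2, o2); (f3, o3)],
     memL (x, bx) (f1, o1) && memL (y, by_) (f1, o1),
     memL (y, by_) (f2, o2) && memL (z, bz) (f2, o2)
   & memL (z, bz) (f3, o3) && memL (x, bx) (f3, o3)].

Definition NT x f1 y f2 z f3 :=
  \sum_(bx <- bools) \sum_(o1 <- os f1) \sum_(by_ <- bools) \sum_(o2 <- os f2)
  \sum_(bz <- bools) \sum_(o3 <- os f3) IT x bx f1 o1 y by_ f2 o2 z bz f3 o3.

Lemma triN : tri liftv lifte memL =
  \sum_(x <- vs) \sum_(f1 <- es) \sum_(y <- vs) \sum_(f2 <- es) \sum_(z <- vs) \sum_(f3 <- es)
    NT x f1 y f2 z f3.
Proof.
rewrite -reorder12 /tri sum_lv; apply: eq_bigr => x _; apply: eq_bigr => bx _.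
rewrite sum_le; apply: eq_bigr => f1 _; apply: eq_bigr => o1 _.
rewrite sum_lv; apply: eq_bigr => y _; apply: eq_bigr => by_ _.
rewrite sum_le; apply: eq_bigr => f2 _; apply: eq_bigr => o2 _.
rewrite sum_lv; apply: eq_bigr => z _; apply: eq_bigr => bz _.
rewrite sum_le; apply: eq_bigr => f3 _; apply: eq_bigr => o3 _.
by [].
Qed.

Definition IP x bx f1 o1 y by_ f2 o2 z bz : nat :=
  nat_of_bool [&& uniq [:: (x, bx); (y, by_); (z, bz)],
     (f1, o1) != (f2, o2),
     memL (x, bx) (f1, o1) && memL (y, by_) (f1, o1)
   & memL (y, by_) (f2, o2) && memL (z, bz) (f2, o2)].

Definition NP x f1 y f2 z :=
  \sum_(bx <- bools) \sum_(o1 <- os f1) \sum_(by_ <- bools) \sum_(o2 <- os f2)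
  \sum_(bz <- bools) IP x bx f1 o1 y by_ f2 o2 z bz.

Lemma pthN : pth liftv lifte memL =
  \sum_(x <- vs) \sum_(f1 <- es) \sum_(y <- vs) \sum_(f2 <- es) \sum_(z <- vs)
    NP x f1 y f2 z.
Proof.
rewrite -reorder10 /pth sum_lv; apply: eq_bigr => x _; apply: eq_bigr => bx _.
rewrite sum_le; apply: eq_bigr => f1 _; apply: eq_bigr => o1 _.
rewrite sum_lv; apply: eq_bigr => y _; apply: eq_bigr => by_ _.
rewrite sum_le; apply: eq_bigr => f2 _; apply: eq_bigr => o2 _.
rewrite sum_lv; apply: eq_bigr => z _; apply: eq_bigr => bz _.
by [].
Qed.

Definition IS x bx f1 o1 y by_ f2 o2 : nat :=
  nat_of_bool [&& (x, bx) != (y, by_),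
     memL (x, bx) (f1, o1) && memL (y, by_) (f1, o1)
   & memL (x, bx) (f2, o2) && memL (y, by_) (f2, o2)].

Definition NS x f1 y f2 :=
  \sum_(bx <- bools) \sum_(o1 <- os f1) \sum_(by_ <- bools) \sum_(o2 <- os f2)
    IS x bx f1 o1 y by_ f2 o2.

Lemma sqN : sq liftv lifte memL =
  \sum_(x <- vs) \sum_(f1 <- es) \sum_(y <- vs) \sum_(f2 <- es) NS x f1 y f2.
Proof.
rewrite -reorder8 /sq sum_lv; apply: eq_bigr => x _; apply: eq_bigr => bx _.
rewrite sum_le; apply: eq_bigr => f1 _; apply: eq_bigr => o1 _.
rewrite sum_lv; apply: eq_bigr => y _; apply: eq_bigr => by_ _.
rewrite sum_le; apply: eq_bigr => f2 _; apply: eq_bigr => o2 _.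
by [].
Qed.

Definition K := (k - 2).+1.
Definition aT := K * K * K + 3 * K.
Definition bP := K * K + 2 * K + 2.
Definition rS := K * K + 2.

Definition baseT x f1 y f2 z f3 : nat :=
  nat_of_bool [&& uniq [:: x; y; z], uniq [:: f1; f2; f3],
     mem0 x f1 && mem0 y f1, mem0 y f2 && mem0 z f2 & mem0 z f3 && mem0 x f3].

Lemma uniq3P (T : eqType) (x y z : T) :
  uniq [:: x; y; z] = [&& x != y, x != z & y != z].
Proof. by rewrite /= !inE !negb_or andbT andbA. Qed.

Lemma NT_strong x f1 y f2 z f3 : f1 \in es -> f2 \in es -> f3 \in es ->
  baseT x f1 y f2 z f3 = 1 -> NT x f1 y f2 z f3 = aT.
Proof.
move=> H1 H2 H3; rewrite /baseT.
case: and5P => // [[Uv Uf /andP [m1 m2] /andP [m3 m4] /andP [m5 m6]]] _.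
have := Uv; rewrite uniq3P => /and3P [xy xz yz].
rewrite /NT.
transitivity (\sum_(bx <- bools) \sum_(o1 <- os f1) \sum_(by_ <- bools) \sum_(o2 <- os f2)
  \sum_(bz <- bools) \sum_(o3 <- os f3)
   (nat_of_bool (memL (x, bx) (f1, o1) && memL (y, by_) (f1, o1)) *
    nat_of_bool (memL (y, by_) (f2, o2) && memL (z, bz) (f2, o2)) *
    nat_of_bool (memL (z, bz) (f3, o3) && memL (x, bx) (f3, o3)))).
  apply: eq_bigr => bx _; apply: eq_bigr => o1 _; apply: eq_bigr => by_ _.
  apply: eq_bigr => o2 _; apply: eq_bigr => bz _; apply: eq_bigr => o3 _.
  rewrite /IT (uniq3_lift bx by_ bz Uv) (uniq3_lift o1 o2 o3 Uf).
  move: (memL (x, bx) (f1, o1) && memL (y, by_) (f1, o1)) => A1.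
  move: (memL (y, by_) (f2, o2) && memL (z, bz) (f2, o2)) => A2.
  move: (memL (z, bz) (f3, o3) && memL (x, bx) (f3, o3)) => A3.
  by case: A1; case: A2; case: A3.
rewrite factor3.
transitivity (\sum_(bx <- bools) \sum_(by_ <- bools) \sum_(bz <- bools)
   Mtab bx by_ * Mtab by_ bz * Mtab bz bx).
  apply: eq_bigr => bx _; apply: eq_bigr => by_ _; apply: eq_bigr => bz _.
  rewrite (Mcount _ _ H1) // (Mcount _ _ H2) // (Mcount _ _ H3) //.
  by rewrite eq_sym.
rewrite /bools !big_cons !big_nil /Mtab /aT -/K.
rewrite ?muln1 ?mul1n ?muln0 ?mul0n ?addn0 ?add0n ?muln1 ?mul1n ?muln0 ?mul0n ?addn0 ?add0n.
ring.
Qed.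

Definition baseP x f1 y f2 z : nat :=
  nat_of_bool [&& uniq [:: x; y; z], f1 != f2,
     mem0 x f1 && mem0 y f1 & mem0 y f2 && mem0 z f2].

Lemma NP_strong x f1 y f2 z : f1 \in es -> f2 \in es ->
  baseP x f1 y f2 z = 1 -> NP x f1 y f2 z = bP.
Proof.
move=> H1 H2; rewrite /baseP.
case: and4P => // [[Uv Uf /andP [m1 m2] /andP [m3 m4]]] _.
have := Uv; rewrite uniq3P => /and3P [xy xz yz].
rewrite /NP.
transitivity (\sum_(bx <- bools) \sum_(o1 <- os f1) \sum_(by_ <- bools) \sum_(o2 <- os f2)
  \sum_(bz <- bools)
   (nat_of_bool (memL (x, bx) (f1, o1) && memL (y, by_) (f1, o1)) *
    nat_of_bool (memL (y, by_) (f2, o2) && memL (z, bz) (f2, o2)))).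
  apply: eq_bigr => bx _; apply: eq_bigr => o1 _; apply: eq_bigr => by_ _.
  apply: eq_bigr => o2 _; apply: eq_bigr => bz _.
  rewrite /IP (uniq3_lift bx by_ bz Uv) xpair_eqE (negbTE Uf).
  move: (memL (x, bx) (f1, o1) && memL (y, by_) (f1, o1)) => A1.
  move: (memL (y, by_) (f2, o2) && memL (z, bz) (f2, o2)) => A2.
  by case: A1; case: A2.
rewrite factor2.
transitivity (\sum_(bx <- bools) \sum_(by_ <- bools) \sum_(bz <- bools)
   Mtab bx by_ * Mtab by_ bz).
  apply: eq_bigr => bx _; apply: eq_bigr => by_ _; apply: eq_bigr => bz _.
  by rewrite (Mcount _ _ H1) // (Mcount _ _ H2) //.
rewrite /bools !big_cons !big_nil /Mtab /bP -/K.
rewrite ?muln1 ?mul1n ?muln0 ?mul0n ?addn0 ?add0n ?muln1 ?mul1n ?muln0 ?mul0n ?addn0 ?add0n.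
ring.
Qed.

Definition baseS x f1 y f2 : nat :=
  nat_of_bool [&& x != y, mem0 x f1 && mem0 y f1 & mem0 x f2 && mem0 y f2].

Lemma NS_strong x f1 y f2 : f1 \in es -> f2 \in es ->
  baseS x f1 y f2 = 1 -> NS x f1 y f2 = rS.
Proof.
move=> H1 H2; rewrite /baseS.
case: and3P => // [[xy /andP [m1 m2] /andP [m3 m4]]] _.
rewrite /NS.
transitivity (\sum_(bx <- bools) \sum_(o1 <- os f1) \sum_(by_ <- bools) \sum_(o2 <- os f2)
   (nat_of_bool (memL (x, bx) (f1, o1) && memL (y, by_) (f1, o1)) *
    nat_of_bool (memL (x, bx) (f2, o2) && memL (y, by_) (f2, o2)))).
  apply: eq_bigr => bx _; apply: eq_bigr => o1 _; apply: eq_bigr => by_ _.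
  apply: eq_bigr => o2 _.
  rewrite /IS xpair_eqE (negbTE xy).
  move: (memL (x, bx) (f1, o1) && memL (y, by_) (f1, o1)) => A1.
  move: (memL (x, bx) (f2, o2) && memL (y, by_) (f2, o2)) => A2.
  by case: A1; case: A2.
rewrite factorS.
transitivity (\sum_(bx <- bools) \sum_(by_ <- bools) Mtab bx by_ * Mtab bx by_).
  apply: eq_bigr => bx _; apply: eq_bigr => by_ _.
  by rewrite (Mcount _ _ H1) // (Mcount _ _ H2) //.
rewrite /bools !big_cons !big_nil /Mtab /rS -/K.
rewrite ?muln1 ?mul1n ?muln0 ?mul0n ?addn0 ?add0n ?muln1 ?mul1n ?muln0 ?mul0n ?addn0 ?add0n.
ring.
Qed.

Lemma memL_ne x b y c f o : memL (x, b) (f, o) -> memL (y, c) (f, o) ->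
  (x, b) != (y, c) -> x != y.
Proof.
move=> h1 h2; apply: contra => /eqP E0; move: h2; rewrite -E0 => h2.
by rewrite (memL_same h1 h2).
Qed.

Lemma size_os f : f \in es -> size (os f) = k.+1.
Proof. by move=> /Hopt [_ S _]; rewrite /= size_map S. Qed.

Definition weakT x f1 y f2 z f3 : bool :=
  [&& uniq [:: x; y; z], mem0 x f1 && mem0 y f1, mem0 y f2 && mem0 z f2
    & mem0 z f3 && mem0 x f3].

Lemma IT_weak x bx f1 o1 y by_ f2 o2 z bz f3 o3 :
  o1 \in os f1 -> o2 \in os f2 -> o3 \in os f3 ->
  IT x bx f1 o1 y by_ f2 o2 z bz f3 o3 <= weakT x f1 y f2 z f3.
Proof.
move=> h1 h2 h3; apply: leq_nb => /and5P [U1 _ /andP [a1 a2] /andP [a3 a4] /andP [a5 a6]].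
have := U1; rewrite uniq3P => /and3P [n12 n13 n23].
rewrite /weakT uniq3P (memL_ne a1 a2 n12) (memL_ne a6 a5 n13) (memL_ne a3 a4 n23).
by rewrite (memL_mem a1 h1) (memL_mem a2 h1) (memL_mem a3 h2) (memL_mem a4 h2)
  (memL_mem a5 h3) (memL_mem a6 h3).
Qed.

Definition CT := 2 * (k.+1 * (2 * (k.+1 * (2 * k.+1)))).

Lemma NT_weak x f1 y f2 z f3 : f1 \in es -> f2 \in es -> f3 \in es ->
  NT x f1 y f2 z f3 <= CT * weakT x f1 y f2 z f3.
Proof.
move=> H1 H2 H3; rewrite /NT.
apply: leq_trans (_ : _ <= \sum_(bx <- bools) \sum_(o1 <- os f1) \sum_(by_ <- bools)
   \sum_(o2 <- os f2) \sum_(bz <- bools) \sum_(o3 <- os f3) nat_of_bool (weakT x f1 y f2 z f3)) _.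
  apply: leq_sum_in => bx _; apply: leq_sum_in => o1 h1; apply: leq_sum_in => by_ _.
  apply: leq_sum_in => o2 h2; apply: leq_sum_in => bz _; apply: leq_sum_in => o3 h3.
  exact: IT_weak.
rewrite !sum_const (size_os H1) (size_os H2) (size_os H3) /CT /=.
move: (nat_of_bool _) => w. rewrite !mulnA. by [].
Qed.

Definition W x f y g : nat :=
  nat_of_bool [&& x != y, mem0 x f && mem0 y f & mem0 x g && mem0 y g].
Definition A12 x f1 y f2 z f3 := mem0 y f1 * ((f2 == f1) * W x f1 z f3).
Definition A13 x f1 y f2 z f3 := mem0 x f1 * ((f3 == f1) * W y f1 z f2).
Definition A23 x f1 y f2 z f3 := mem0 z f2 * ((f3 == f2) * W x f1 y f2).

Lemma NT_bound x f1 y f2 z f3 : f1 \in es -> f2 \in es -> f3 \in es ->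
  NT x f1 y f2 z f3 <= aT * baseT x f1 y f2 z f3 +
     CT * (A12 x f1 y f2 z f3 + A13 x f1 y f2 z f3 + A23 x f1 y f2 z f3).
Proof.
move=> H1 H2 H3.
case Hb: (baseT x f1 y f2 z f3 == 1).
  by rewrite (NT_strong H1 H2 H3 (eqP Hb)) (eqP Hb) muln1 leq_addr.
have Hb0 : baseT x f1 y f2 z f3 = 0 by apply: nb01.
rewrite Hb0 muln0 add0n; apply: leq_trans; first exact: NT_weak.
rewrite leq_mul2l; apply/orP; right.
rewrite /weakT; case: and4P => // [[Uv /andP [m1 m2] /andP [m3 m4] /andP [m5 m6]]].
move: Hb0; rewrite /baseT Uv m1 m2 m3 m4 m5 m6 uniq3P /=.
have := Uv; rewrite uniq3P => /and3P [xy xz yz].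
case: (f2 =P f1) => [E12|N12].
  by subst f2; rewrite /A12 eqxx /W m2 xz m1 m4 m5 m6.
case: (f3 =P f1) => [E13|N13].
  by subst f3; rewrite /A13 eqxx /W m1 yz m2 m5 m3 m4 addn1.
case: (f3 =P f2) => [E23|N23].
  by subst f3; rewrite /A23 eqxx /W m4 xy m1 m2 m6 m3 addn1.
move/eqP: N12 => N12; move/eqP: N13 => N13; move/eqP: N23 => N23.
by rewrite (eq_sym f1 f2) (negbTE N12) (eq_sym f1 f3) (negbTE N13) (eq_sym f2 f3) (negbTE N23).
Qed.

Definition S6 (F : V -> E -> V -> E -> V -> E -> nat) :=
  \sum_(x <- vs) \sum_(f1 <- es) \sum_(y <- vs) \sum_(f2 <- es) \sum_(z <- vs) \sum_(f3 <- es)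
    F x f1 y f2 z f3.

Lemma S6_le (F G : V -> E -> V -> E -> V -> E -> nat) :
  (forall x f1 y f2 z f3, f1 \in es -> f2 \in es -> f3 \in es ->
     F x f1 y f2 z f3 <= G x f1 y f2 z f3) -> S6 F <= S6 G.
Proof.
move=> H; apply: leq_sum_in => x _; apply: leq_sum_in => f1 H1; apply: leq_sum_in => y _.
apply: leq_sum_in => f2 H2; apply: leq_sum_in => z _; apply: leq_sum_in => f3 H3.
exact: H.
Qed.

Lemma S6_add (F G : V -> E -> V -> E -> V -> E -> nat) :
  S6 (fun x f1 y f2 z f3 => F x f1 y f2 z f3 + G x f1 y f2 z f3) = S6 F + S6 G.
Proof.
rewrite /S6 -big_split; apply: eq_bigr => x _; rewrite -big_split; apply: eq_bigr => f1 _.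
rewrite -big_split; apply: eq_bigr => y _; rewrite -big_split; apply: eq_bigr => f2 _.
rewrite -big_split; apply: eq_bigr => z _; rewrite -big_split; apply: eq_bigr => f3 _.
by [].
Qed.

Lemma S6_mul c (F : V -> E -> V -> E -> V -> E -> nat) :
  S6 (fun x f1 y f2 z f3 => c * F x f1 y f2 z f3) = c * S6 F.
Proof.
rewrite /S6 big_distrr; apply: eq_bigr => x _; rewrite big_distrr; apply: eq_bigr => f1 _.
rewrite big_distrr; apply: eq_bigr => y _; rewrite big_distrr; apply: eq_bigr => f2 _.
rewrite big_distrr; apply: eq_bigr => z _; rewrite big_distrr; apply: eq_bigr => f3 _.
by [].
Qed.

Lemma sum_mem0 f : f \in es -> \sum_(y <- vs) nat_of_bool (mem0 y f) <= k.
Proof. by move=> /Hopt [_ S _]; rewrite -S; apply: count_in_le. Qed.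

Lemma sumA12 : S6 A12 <= k * sq vs es mem0.
Proof.
rewrite /S6 /sq big_distrr; apply: leq_sum => x _.
rewrite big_distrr; apply: leq_sum_in => f1 H1.
pose S := \sum_(z <- vs) \sum_(f3 <- es) W x f1 z f3.
apply: leq_trans (_ : _ <= \sum_(y <- vs) mem0 y f1 * S) _.
  apply: leq_sum => y _.
  apply: (eq_leq_trans (b := \sum_(f2 <- es) (f2 == f1) * (mem0 y f1 * S))).
    apply: eq_bigr => f2 _; rewrite /S mulnA big_distrr; apply: eq_bigr => z _.
    rewrite big_distrr; apply: eq_bigr => f3 _.
    by rewrite /A12 mulnA (mulnC (mem0 y f1)).
  exact: sum_eq1_le.
rewrite -big_distrl /=; apply: leq_mul => //.
exact: sum_mem0.
Qed.

Lemma sumA23 : S6 A23 <= k * sq vs es mem0.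
Proof.
rewrite /S6 /sq big_distrr; apply: leq_sum => x _.
rewrite big_distrr; apply: leq_sum => f1 _.
rewrite big_distrr; apply: leq_sum => y _.
rewrite big_distrr; apply: leq_sum_in => f2 H2.
apply: leq_trans (_ : _ <= \sum_(z <- vs) mem0 z f2 * W x f1 y f2) _.
  apply: leq_sum => z _.
  apply: (eq_leq_trans (b := \sum_(f3 <- es) (f3 == f2) * (mem0 z f2 * W x f1 y f2))).
    by apply: eq_bigr => f3 _; rewrite /A23 mulnA (mulnC (mem0 z f2)) -mulnA.
  exact: sum_eq1_le.
rewrite -big_distrl /=; apply: leq_mul => //.
exact: sum_mem0.
Qed.

Lemma sumA13 : S6 A13 <= k * sq vs es mem0.
Proof.
apply: leq_trans (_ : _ <= \sum_(x <- vs) \sum_(f1 <- es) \sum_(y <- vs) \sum_(f2 <- es)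
   \sum_(z <- vs) mem0 x f1 * W y f1 z f2) _.
  apply: leq_sum => x _; apply: leq_sum => f1 _; apply: leq_sum => y _.
  apply: leq_sum => f2 _; apply: leq_sum => z _.
  apply: (eq_leq_trans (b := \sum_(f3 <- es) (f3 == f1) * (mem0 x f1 * W y f1 z f2))).
    by apply: eq_bigr => f3 _; rewrite /A13 mulnA (mulnC (mem0 x f1)) -mulnA.
  exact: sum_eq1_le.
apply: (eq_leq_trans (b := \sum_(f1 <- es) \sum_(x <- vs) mem0 x f1 *
   (\sum_(y <- vs) \sum_(f2 <- es) \sum_(z <- vs) W y f1 z f2))).
  rewrite exchange_big; apply: eq_bigr => f1 _; apply: eq_bigr => x _.
  rewrite big_distrr; apply: eq_bigr => y _; rewrite big_distrr; apply: eq_bigr => f2 _.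
  by rewrite big_distrr.
apply: leq_trans (_ : _ <= \sum_(f1 <- es) k *
   (\sum_(y <- vs) \sum_(f2 <- es) \sum_(z <- vs) W y f1 z f2)) _.
  apply: leq_sum_in => f1 H1; rewrite -big_distrl /=; apply: leq_mul => //.
  exact: sum_mem0.
rewrite -big_distrr /= leq_mul2l; apply/orP; right.
rewrite /sq exchange_big; apply: eq_leq; apply: eq_bigr => y _.
apply: eq_bigr => f1 _; exact: exchange_big.
Qed.

Theorem tri_lo : aT * tri vs es mem0 <= tri liftv lifte memL.
Proof.
rewrite triN; change (aT * S6 baseT <= S6 NT).
rewrite -S6_mul; apply: S6_le => x f1 y f2 z f3 H1 H2 H3.
case Hb: (baseT x f1 y f2 z f3 == 1).
  by rewrite (NT_strong H1 H2 H3 (eqP Hb)) (eqP Hb) muln1.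
have Hb0 : baseT x f1 y f2 z f3 = 0 by apply: nb01.
by rewrite Hb0 muln0.
Qed.

Theorem tri_hi : tri liftv lifte memL <=
  aT * tri vs es mem0 + CT * (k * sq vs es mem0 + k * sq vs es mem0 + k * sq vs es mem0).
Proof.
rewrite triN; change (S6 NT <= aT * S6 baseT + CT * (k * sq vs es mem0 + k * sq vs es mem0 + k * sq vs es mem0)).
apply: leq_trans (S6_le (G := fun x f1 y f2 z f3 => aT * baseT x f1 y f2 z f3 +
     CT * (A12 x f1 y f2 z f3 + A13 x f1 y f2 z f3 + A23 x f1 y f2 z f3)) _) _.
  by move=> x f1 y f2 z f3 H1 H2 H3; apply: NT_bound.
rewrite S6_add S6_mul S6_mul !S6_add leq_add2l leq_mul2l; apply/orP; right.
by rewrite !leq_add ?sumA12 ?sumA13 ?sumA23.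
Qed.

Definition weakP x f1 y f2 z : bool :=
  [&& x != y, y != z, mem0 x f1 && mem0 y f1 & mem0 y f2 && mem0 z f2].

Lemma IP_weak x bx f1 o1 y by_ f2 o2 z bz :
  o1 \in os f1 -> o2 \in os f2 ->
  IP x bx f1 o1 y by_ f2 o2 z bz <= weakP x f1 y f2 z.
Proof.
move=> h1 h2; apply: leq_nb => /and4P [U1 _ /andP [a1 a2] /andP [a3 a4]].
have := U1; rewrite uniq3P => /and3P [n12 n13 n23].
rewrite /weakP (memL_ne a1 a2 n12) (memL_ne a3 a4 n23).
by rewrite (memL_mem a1 h1) (memL_mem a2 h1) (memL_mem a3 h2) (memL_mem a4 h2).
Qed.

Definition CP := 2 * (k.+1 * (2 * (k.+1 * 2))).

Lemma NP_weak x f1 y f2 z : f1 \in es -> f2 \in es ->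
  NP x f1 y f2 z <= CP * weakP x f1 y f2 z.
Proof.
move=> H1 H2; rewrite /NP.
apply: leq_trans (_ : _ <= \sum_(bx <- bools) \sum_(o1 <- os f1) \sum_(by_ <- bools)
   \sum_(o2 <- os f2) \sum_(bz <- bools) nat_of_bool (weakP x f1 y f2 z)) _.
  apply: leq_sum_in => bx _; apply: leq_sum_in => o1 h1; apply: leq_sum_in => by_ _.
  apply: leq_sum_in => o2 h2; apply: leq_sum_in => bz _.
  exact: IP_weak.
rewrite !sum_const (size_os H1) (size_os H2) /CP /=.
move: (nat_of_bool _) => w. rewrite !mulnA. by [].
Qed.

Definition AP1 x f1 y f2 z := (z == x) * W x f1 y f2.
Definition AP2 x f1 y f2 z := (f2 == f1) * (mem0 z f1 * W x f1 y f1).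

Lemma NP_bound x f1 y f2 z : f1 \in es -> f2 \in es ->
  NP x f1 y f2 z <= bP * baseP x f1 y f2 z + CP * (AP1 x f1 y f2 z + AP2 x f1 y f2 z).
Proof.
move=> H1 H2.
case Hb: (baseP x f1 y f2 z == 1).
  by rewrite (NP_strong H1 H2 (eqP Hb)) (eqP Hb) muln1 leq_addr.
have Hb0 : baseP x f1 y f2 z = 0 by apply: nb01.
rewrite Hb0 muln0 add0n; apply: leq_trans; first exact: NP_weak.
rewrite leq_mul2l; apply/orP; right.
rewrite /weakP; case: and4P => // [[xy yz /andP [m1 m2] /andP [m3 m4]]].
move: Hb0; rewrite /baseP m1 m2 m3 m4 uniq3P xy yz /=.
case: (z =P x) => [Ezx|Nzx].
  by subst z; rewrite /AP1 eqxx /W xy m1 m2 m4 m3.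
case: (f2 =P f1) => [E21|N21].
  by subst f2; rewrite /AP2 eqxx /W m4 xy m1 m2 addn1.
move/eqP: Nzx => Nzx; move/eqP: N21 => N21.
by rewrite (eq_sym x z) Nzx (eq_sym f1 f2) N21.
Qed.

Definition S5 (F : V -> E -> V -> E -> V -> nat) :=
  \sum_(x <- vs) \sum_(f1 <- es) \sum_(y <- vs) \sum_(f2 <- es) \sum_(z <- vs)
    F x f1 y f2 z.

Lemma S5_le (F G : V -> E -> V -> E -> V -> nat) :
  (forall x f1 y f2 z, f1 \in es -> f2 \in es ->
     F x f1 y f2 z <= G x f1 y f2 z) -> S5 F <= S5 G.
Proof.
move=> H; apply: leq_sum_in => x _; apply: leq_sum_in => f1 H1; apply: leq_sum_in => y _.
apply: leq_sum_in => f2 H2; apply: leq_sum_in => z _.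
exact: H.
Qed.

Lemma S5_add (F G : V -> E -> V -> E -> V -> nat) :
  S5 (fun x f1 y f2 z => F x f1 y f2 z + G x f1 y f2 z) = S5 F + S5 G.
Proof.
rewrite /S5 -big_split; apply: eq_bigr => x _; rewrite -big_split; apply: eq_bigr => f1 _.
rewrite -big_split; apply: eq_bigr => y _; rewrite -big_split; apply: eq_bigr => f2 _.
rewrite -big_split; apply: eq_bigr => z _.
by [].
Qed.

Lemma S5_mul c (F : V -> E -> V -> E -> V -> nat) :
  S5 (fun x f1 y f2 z => c * F x f1 y f2 z) = c * S5 F.
Proof.
rewrite /S5 big_distrr; apply: eq_bigr => x _; rewrite big_distrr; apply: eq_bigr => f1 _.
rewrite big_distrr; apply: eq_bigr => y _; rewrite big_distrr; apply: eq_bigr => f2 _.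
rewrite big_distrr; apply: eq_bigr => z _.
by [].
Qed.

Lemma sumAP1 : S5 AP1 <= sq vs es mem0.
Proof.
apply: leq_sum => x _; apply: leq_sum => f1 _; apply: leq_sum => y _.
apply: leq_sum => f2 _.
exact: sum_eq1_le.
Qed.

Lemma sumAP2 : S5 AP2 <= k * sq vs es mem0.
Proof.
rewrite /S5 /sq big_distrr; apply: leq_sum => x _.
rewrite big_distrr; apply: leq_sum_in => f1 H1.
rewrite big_distrr; apply: leq_sum => y _.
apply: leq_trans (_ : _ <= k * W x f1 y f1) _.
  apply: (eq_leq_trans (b := \sum_(f2 <- es) (f2 == f1) *
      ((\sum_(z <- vs) mem0 z f1) * W x f1 y f1))).
    apply: eq_bigr => f2 _; rewrite big_distrl big_distrr.
    by apply: eq_bigr => z _.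
  apply: leq_trans; first exact: sum_eq1_le.
  apply: leq_mul => //; exact: sum_mem0.
rewrite leq_mul2l; apply/orP; right.
exact: (@leq_sum_term _ es f1 (fun g => W x f1 y g) H1).
Qed.

Theorem pth_lo : bP * pth vs es mem0 <= pth liftv lifte memL.
Proof.
rewrite pthN; change (bP * S5 baseP <= S5 NP).
rewrite -S5_mul; apply: S5_le => x f1 y f2 z H1 H2.
case Hb: (baseP x f1 y f2 z == 1).
  by rewrite (NP_strong H1 H2 (eqP Hb)) (eqP Hb) muln1.
have Hb0 : baseP x f1 y f2 z = 0 by apply: nb01.
by rewrite Hb0 muln0.
Qed.

Theorem pth_hi : pth liftv lifte memL <=
  bP * pth vs es mem0 + CP * (sq vs es mem0 + k * sq vs es mem0).
Proof.
rewrite pthN; change (S5 NP <= bP * S5 baseP + CP * (sq vs es mem0 + k * sq vs es mem0)).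
apply: leq_trans (S5_le (G := fun x f1 y f2 z => bP * baseP x f1 y f2 z +
     CP * (AP1 x f1 y f2 z + AP2 x f1 y f2 z)) _) _.
  by move=> x f1 y f2 z H1 H2; apply: NP_bound.
rewrite S5_add S5_mul S5_mul S5_add leq_add2l leq_mul2l; apply/orP; right.
by rewrite leq_add ?sumAP1 ?sumAP2.
Qed.

Lemma IS_weak x bx f1 o1 y by_ f2 o2 :
  o1 \in os f1 -> o2 \in os f2 ->
  IS x bx f1 o1 y by_ f2 o2 <= baseS x f1 y f2.
Proof.
move=> h1 h2; apply: leq_nb => /and3P [n12 /andP [a1 a2] /andP [a3 a4]].
rewrite (memL_ne a1 a2 n12).
by rewrite (memL_mem a1 h1) (memL_mem a2 h1) (memL_mem a3 h2) (memL_mem a4 h2).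
Qed.

Lemma NS_bound x f1 y f2 : f1 \in es -> f2 \in es ->
  NS x f1 y f2 <= rS * baseS x f1 y f2.
Proof.
move=> H1 H2.
case Hb: (baseS x f1 y f2 == 1).
  by rewrite (NS_strong H1 H2 (eqP Hb)) (eqP Hb) muln1.
have Hb0 : baseS x f1 y f2 = 0 by apply: nb01.
rewrite Hb0 muln0 /NS leqn0; apply/eqP.
apply/eqP; rewrite -leqn0.
apply: leq_trans (_ : _ <= \sum_(bx <- bools) \sum_(o1 <- os f1) \sum_(by_ <- bools)
   \sum_(o2 <- os f2) 0) _.
  apply: leq_sum_in => bx _; apply: leq_sum_in => o1 h1; apply: leq_sum_in => by_ _.
  apply: leq_sum_in => o2 h2.
  by rewrite -Hb0; apply: IS_weak.
by rewrite !sum_const !muln0.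
Qed.

Theorem sq_hi : sq liftv lifte memL <= rS * sq vs es mem0.
Proof.
rewrite sqN /sq big_distrr; apply: leq_sum => x _.
rewrite big_distrr; apply: leq_sum_in => f1 H1.
rewrite big_distrr; apply: leq_sum => y _.
rewrite big_distrr; apply: leq_sum_in => f2 H2.
exact: NS_bound.
Qed.

End Hyp.


Lemma uniq_pairs (S T : eqType) (s : seq S) (t : S -> seq T) :
  uniq s -> (forall x, x \in s -> uniq (t x)) ->
  uniq [seq (x, y) | x <- s, y <- t x].
Proof.
elim: s => [|a s IH] //= /andP [an us] Ht.
rewrite cat_uniq map_inj_uniq ?Ht ?inE ?eqxx //=; last by move=> y1 y2 [].
rewrite IH // ?andbT; last by move=> x xs; apply: Ht; rewrite inE xs orbT.
apply/hasPn => p /allpairsPdep [x [y [xs _ ->]]].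
apply/mapP => [[y0 _ [E0 _]]]; by move: an; rewrite -E0 xs.
Qed.

Lemma uniq3_map (T U : eqType) (f : T -> U) (s : seq T) a b c :
  {in s &, injective f} -> a \in s -> b \in s -> c \in s ->
  uniq [:: f a; f b; f c] = uniq [:: a; b; c].
Proof. by move=> I ha hb hc; rewrite !uniq3P !(inj_in_eq I). Qed.

Section Transport.
Variables (V E V' E' : eqType) (vs : seq V) (es : seq E) (vs' : seq V') (es' : seq E').
Variables (mem : V -> E -> bool) (mem' : V' -> E' -> bool) (phi : V -> V') (psi : E -> E').
Hypotheses (Pv : perm_eq vs' (map phi vs)) (Pe : perm_eq es' (map psi es)).
Hypotheses (Iv : {in vs &, injective phi}) (Ie : {in es &, injective psi}).
Hypothesis Hm : forall u e, u \in vs -> e \in es -> mem' (phi u) (psi e) = mem u e.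

Lemma tri_transport : tri vs' es' mem' = tri vs es mem.
Proof.
rewrite /tri (perm_big _ Pv) big_map; apply: eq_sum_in => u hu.
rewrite (perm_big _ Pe) big_map; apply: eq_sum_in => e1 h1.
rewrite (perm_big _ Pv) big_map; apply: eq_sum_in => v hv.
rewrite (perm_big _ Pe) big_map; apply: eq_sum_in => e2 h2.
rewrite (perm_big _ Pv) big_map; apply: eq_sum_in => w hw.
rewrite (perm_big _ Pe) big_map; apply: eq_sum_in => e3 h3.
by rewrite !Hm // (uniq3_map Iv hu hv hw) (uniq3_map Ie h1 h2 h3).
Qed.

Lemma pth_transport : pth vs' es' mem' = pth vs es mem.
Proof.
rewrite /pth (perm_big _ Pv) big_map; apply: eq_sum_in => u hu.
rewrite (perm_big _ Pe) big_map; apply: eq_sum_in => e1 h1.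
rewrite (perm_big _ Pv) big_map; apply: eq_sum_in => v hv.
rewrite (perm_big _ Pe) big_map; apply: eq_sum_in => e2 h2.
rewrite (perm_big _ Pv) big_map; apply: eq_sum_in => w hw.
by rewrite !Hm // (uniq3_map Iv hu hv hw) (inj_in_eq Ie).
Qed.

Lemma sq_transport : sq vs' es' mem' = sq vs es mem.
Proof.
rewrite /sq (perm_big _ Pv) big_map; apply: eq_sum_in => u hu.
rewrite (perm_big _ Pe) big_map; apply: eq_sum_in => e1 h1.
rewrite (perm_big _ Pv) big_map; apply: eq_sum_in => v hv.
rewrite (perm_big _ Pe) big_map; apply: eq_sum_in => e2 h2.
by rewrite !Hm // (inj_in_eq Iv).
Qed.
End Transport.


Section Concrete.
Local Open Scope fset_scope.
Variables (k : nat) (H : hgraph).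
Hypothesis Hu : uniform k H.

Definition eopts (f : {fset nat}) : seq nat := enum_fset f.
Local Notation n := (nv H).
Definition phiV (u : nat * bool) : nat := if u.2 then (u.1 + n)%N else u.1.
Definition psiE (e : {fset nat} * option nat) : {fset nat} :=
  if e.2 is Some z then (e.1 `\ z) `|` [fset (z + n)%N] else e.1.

Lemma vlt x f : f \in edges H -> x \in f -> (x < n)%N.
Proof. by move=> /Hu [_ h] /h. Qed.

Lemma mem_verts x : (x \in verts H) = (x < n)%N.
Proof. by rewrite /verts mem_iota. Qed.

Lemma Hopt0 : forall f, f \in hedges H ->
  [/\ uniq (eopts f), size (eopts f) = k & {subset eopts f <= verts H}].
Proof.
move=> f hf; have hf' : f \in edges H by [].
split; first exact: fset_uniq.
  by have [<- _] := Hu hf'.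
by move=> x hx; rewrite mem_verts; apply: (vlt hf').
Qed.

Lemma mem_liftv (x : nat) b : ((x, b) \in liftv (verts H)) = (x \in verts H).
Proof.
apply/allpairsPdep/idP => [[y [c [hy _ [-> _]]]] //|hx].
by exists x, b; split => //; case: b.
Qed.

Lemma mem_lifte f o : ((f, o) \in lifte (hedges H) eopts) = (f \in hedges H) && (o \in os eopts f).
Proof.
apply/allpairsPdep/andP => [[g [p [hg hp [-> ->]]]] //|[hf ho]].
by exists f, o.
Qed.

Lemma inj_phi : {in liftv (verts H) &, injective phiV}.
Proof.
move=> [x b] [y c]; rewrite !mem_liftv !mem_verts /phiV /= => hx hy.
case: b; case: c => /=.
- by move/eqP; rewrite eqn_add2r => /eqP ->.
- by move=> E0; move: hy; rewrite -E0 ltnNge leq_addl.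
- by move=> E0; move: hx; rewrite E0 ltnNge leq_addl.
- by move ->.
Qed.

Lemma notin_big f z : f \in edges H -> ((z + n)%N \in f) = false.
Proof.
move=> hf; apply/negP => hz; have := vlt hf hz.
by rewrite ltnNge leq_addl.
Qed.

Lemma inj_psi : {in lifte (hedges H) eopts &, injective psiE}.
Proof.
move=> [f o] [g p]; rewrite !mem_lifte => /andP [hf ho] /andP [hg hp].
have hf' : f \in edges H by []. have hg' : g \in edges H by [].
rewrite /psiE /=; case: o ho => [z|] ho; case: p hp => [w|] hp.
- move=> E0.
  have zw : z = w.
    have := congr1 (fun A => (z + n)%N \in A) E0 => /=.
    rewrite !in_fsetU !in_fsetD1 !in_fset1 eqxx orbT (notin_big _ hg') andbF /=.
    by move/esym; rewrite eqn_add2r => /eqP.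
  subst w; congr (_, _); apply/fsetP => y.
  have := congr1 (fun A => y \in A) E0 => /=.
  rewrite !in_fsetU !in_fsetD1 !in_fset1.
  have zf : z \in f by move: ho; rewrite /os inE /= mem_map //; apply: Some_inj.
  have zg : z \in g by move: hp; rewrite /os inE /= mem_map //; apply: Some_inj.
  case: (y =P z) => [->|_] /=; first by rewrite zf zg.
  case: (y =P (z + n)%N) => [->|_]; last by rewrite !orbF.
  by rewrite (notin_big _ hf') (notin_big _ hg').
- move=> E0; have := congr1 (fun A => (z + n)%N \in A) E0 => /=.
  by rewrite !in_fsetU !in_fset1 eqxx orbT (notin_big _ hg').
- move=> E0; have := congr1 (fun A => (w + n)%N \in A) E0 => /=.
  by rewrite !in_fsetU !in_fset1 eqxx orbT (notin_big _ hf').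
- by move ->.
Qed.

Lemma mem_phipsi u e : u \in liftv (verts H) -> e \in lifte (hedges H) eopts ->
  (phiV u \in psiE e) = memL eopts u e.
Proof.
case: u => x b; case: e => f o; rewrite mem_liftv mem_verts mem_lifte => hx /andP [hf ho].
have hf' : f \in edges H by [].
rewrite /phiV /psiE /memL /=.
case: b; case: o ho => [z|] ho /=.
- rewrite in_fsetU in_fsetD1 in_fset1 (notin_big _ hf') andbF /= eqn_add2r.
  by rewrite eqSome eq_sym.
- exact: notin_big.
- rewrite in_fsetU in_fsetD1 in_fset1 eqSome.
  have -> : (x == z + n)%N = false.
    by apply/negP => /eqP E0; move: hx; rewrite E0 ltnNge leq_addl.
  by rewrite orbF andbC eq_sym.
- by rewrite andbT.
Qed.

Lemma uniq_liftv : uniq (liftv (verts H)).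
Proof. by apply: uniq_pairs; [exact: iota_uniq|]. Qed.

Lemma uniq_os f : uniq (os eopts f).
Proof.
rewrite /os /= map_inj_uniq; last by move=> a b [].
rewrite fset_uniq andbT; apply/mapP => [[x _]] //.
Qed.

Lemma uniq_lifte : uniq (lifte (hedges H) eopts).
Proof. apply: uniq_pairs; [exact: fset_uniq| move=> f _; exact: uniq_os]. Qed.

Lemma perm_verts : perm_eq (verts (ilth_step H)) (map phiV (liftv (verts H))).
Proof.
apply: uniq_perm; first exact: iota_uniq.
  by rewrite map_inj_in_uniq ?uniq_liftv //; exact: inj_phi.
move=> y; rewrite /verts /= mem_iota add0n; apply/idP/mapP => [hy|[[x b] hxb ->]].
  case: (ltnP y n) => hyn.
    by exists (y, false); rewrite ?mem_liftv ?mem_verts.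
  exists ((y - n)%N, true); rewrite ?mem_liftv ?mem_verts /phiV /= ?subnK //.
  by rewrite ltn_subLR.
move: hxb; rewrite mem_liftv mem_verts /phiV /=; case: b => /= hx.
  by rewrite ltn_add2r.
by apply: leq_trans hx (leq_addr _ _).
Qed.

Lemma perm_edges : perm_eq (hedges (ilth_step H)) (map psiE (lifte (hedges H) eopts)).
Proof.
apply: uniq_perm; first exact: fset_uniq.
  by rewrite map_inj_in_uniq ?uniq_lifte //; exact: inj_psi.
move=> e; rewrite /hedges /ilth_step /=.
change ((e \in edges H `|` [fset e0 in clone_edges H]) = (e \in map psiE (lifte (hedges H) eopts))).
rewrite in_fsetU inE; apply/orP/mapP => [[he|]|[[f o] hfo ->]].
- by exists (e, None) => //; rewrite mem_lifte; apply/andP; split => //; rewrite /os inE.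
- rewrite /clone_edges => /allpairsPdep [f [z [hf hz ->]]].
  exists (f, Some z) => //; rewrite mem_lifte hf /= /os inE /=.
  by rewrite mem_map //; apply: Some_inj.
- move: hfo; rewrite mem_lifte => /andP [hf]; rewrite /os inE /psiE /=.
  case: o => [z|] /=; last by left.
  rewrite mem_map; last by move=> a b [].
  move=> hz; right; rewrite /clone_edges; apply/allpairsPdep.
  by exists f, z.
Qed.

Lemma tri_step : ntriangles (ilth_step H) =
  tri (liftv (verts H)) (lifte (hedges H) eopts) (memL eopts).
Proof.
change (tri (verts (ilth_step H)) (hedges (ilth_step H)) (fun x e => x \in e) =
  tri (liftv (verts H)) (lifte (hedges H) eopts) (memL eopts)).
apply: tri_transport perm_verts perm_edges inj_phi inj_psi _.
exact: mem_phipsi.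
Qed.

Lemma pth_step : npaths2 (ilth_step H) =
  pth (liftv (verts H)) (lifte (hedges H) eopts) (memL eopts).
Proof.
change (pth (verts (ilth_step H)) (hedges (ilth_step H)) (fun x e => x \in e) =
  pth (liftv (verts H)) (lifte (hedges H) eopts) (memL eopts)).
apply: pth_transport perm_verts perm_edges inj_phi inj_psi _.
exact: mem_phipsi.
Qed.

Definition sqH (G : hgraph) := sq (verts G) (hedges G) (fun x e => x \in e).

Lemma sq_step : sqH (ilth_step H) =
  sq (liftv (verts H)) (lifte (hedges H) eopts) (memL eopts).
Proof.
rewrite /sqH; apply: sq_transport perm_verts perm_edges inj_phi _.
exact: mem_phipsi.
Qed.

Lemma uniform_step : uniform k (ilth_step H).
Proof.
move=> e; rewrite /ilth_step /= in_fsetU inE => /orP [he|].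
  have [c hl] := Hu he; split => // x hx; apply: leq_trans (hl x hx) (leq_addr _ _).
rewrite /clone_edges => /allpairsPdep [f [z [hf hz ->]]].
have hf' : f \in edges H by [].
have hz' : z \in f by [].
have [cf hl] := Hu hf'.
split.
  rewrite fsetUC cardfsU1 in_fsetD1 (notin_big _ hf') andbF /=.
  have := cardfsD1 z f; rewrite hz' cf /=. lia.
move=> x; rewrite in_fsetU in_fsetD1 in_fset1 => /orP [/andP [_ hx]|/eqP ->].
  by apply: leq_trans (hl x hx) (leq_addr _ _).
by rewrite ltn_add2r; apply: hl.
Qed.

End Concrete.

Import Order.TTheory GRing.Theory Num.Theory.

Lemma frac_le (n1 d1 n2 d2 : nat) : (0 < d1)%N -> (0 < d2)%N -> (n1 * d2 <= n2 * d1)%N ->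
  ((n1%:R / d1%:R : rat) <= n2%:R / d2%:R)%R.
Proof.
move=> h1 h2 h.
by rewrite ler_pdivrMr ?ltr0n // mulrAC ler_pdivlMr ?ltr0n // -!natrM ler_nat.
Qed.

Lemma aT_eq k : (2 <= k)%N -> aT k = ((k - 1) ^ 3 + 3 * (k - 1))%N.
Proof.
case: k => [|[|m]] // _; rewrite /aT /K.
have -> : (m.+2 - 2 = m)%N by lia. have -> : (m.+2 - 1 = m.+1)%N by lia. ring.
Qed.

Lemma bP_eq k : (2 <= k)%N -> bP k = (k ^ 2 + 1)%N.
Proof.
case: k => [|[|m]] // _; rewrite /bP /K.
have -> : (m.+2 - 2 = m)%N by lia. ring.
Qed.

Lemma rS_lt_aT k : (rS k < aT k)%N.
Proof.
rewrite /rS /aT; set K0 := K k.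
have hK : (1 <= K0)%N by rewrite /K0 /K.
have h : (K0 * K0 <= K0 * K0 * K0)%N by rewrite leq_pmulr.
move: h hK; set X := (K0 * K0)%N; set Y := (X * K0)%N => h hK. lia.
Qed.

Lemma rS_lt_bP k : (rS k < bP k)%N.
Proof.
rewrite /rS /bP; set K0 := K k.
have hK : (1 <= K0)%N by rewrite /K0 /K.
move: hK; set X := (K0 * K0)%N => hK. lia.
Qed.

Section Steps.
Variables (k : nat) (H : hgraph).
Hypothesis Hu : uniform k H.

Lemma stepT_lo : (aT k * ntriangles H <= ntriangles (ilth_step H))%N.
Proof. rewrite (tri_step Hu); exact: (tri_lo (iota_uniq _ _) (fset_uniq _) (Hopt0 Hu)). Qed.

Lemma stepT_hi : (ntriangles (ilth_step H) <=
   aT k * ntriangles H + CT k * (k * sqH H + k * sqH H + k * sqH H))%N.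
Proof. rewrite (tri_step Hu); exact: (tri_hi (iota_uniq _ _) (fset_uniq _) (Hopt0 Hu)). Qed.

Lemma stepP_lo : (bP k * npaths2 H <= npaths2 (ilth_step H))%N.
Proof. rewrite (pth_step Hu); exact: (pth_lo (iota_uniq _ _) (fset_uniq _) (Hopt0 Hu)). Qed.

Lemma stepP_hi : (npaths2 (ilth_step H) <=
   bP k * npaths2 H + CP k * (sqH H + k * sqH H))%N.
Proof. rewrite (pth_step Hu); exact: (pth_hi (iota_uniq _ _) (fset_uniq _) (Hopt0 Hu)). Qed.

Lemma stepS_hi : (sqH (ilth_step H) <= rS k * sqH H)%N.
Proof. rewrite (sq_step Hu); exact: (sq_hi (iota_uniq _ _) (fset_uniq _) (Hopt0 Hu)). Qed.
End Steps.

Lemma potential (a rho C : nat) (T S : nat -> nat) : (rho <= a)%N ->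
  (forall t, S t.+1 <= rho * S t)%N -> (forall t, T t.+1 <= a * T t + C * S t)%N ->
  forall t, ((a - rho) * T t + C * S t <= a ^ t * ((a - rho) * T 0 + C * S 0))%N.
Proof.
move=> hra hS hT; elim => [|t IH]; first by rewrite expn0 mul1n.
apply: leq_trans (_ : _ <= (a - rho) * (a * T t + C * S t) + C * (rho * S t))%N _.
  by apply: leq_add; rewrite leq_mul2l ?hT ?hS orbT.
have -> : ((a - rho) * (a * T t + C * S t) + C * (rho * S t) =
   a * ((a - rho) * T t + C * S t))%N.
  move: (a - rho)%N (subnK hra) => d <-. ring.
by rewrite expnS -mulnA leq_mul2l IH orbT.
Qed.

Lemma iter_lo (a : nat) (T : nat -> nat) : (forall t, a * T t <= T t.+1)%N ->
  forall s t, (a ^ s * T t <= T (s + t))%N.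
Proof.
move=> h; elim => [|s IH] t; first by rewrite expn0 mul1n.
rewrite expnS -mulnA addSn; apply: leq_trans (h _).
by rewrite leq_mul2l IH orbT.
Qed.

Import Order.TTheory GRing.Theory Num.Theory.

Section Pos.
Local Open Scope fset_scope.
Variables (k : nat) (H : hgraph).
Hypotheses (hk : (2 <= k)%N) (Hu : uniform k H) (Hne : edges H != fset0).

Lemma exists_edge : exists f, f \in edges H.
Proof. by case/fset0Pn: Hne => f hf; exists f. Qed.

Lemma pos_paths : (0 < npaths2 (ilth_step H))%N.
Proof.
have [f hf] := exists_edge.
have [cf hl] := Hu hf.
set s := eopts f.
have Us : uniq s := fset_uniq _.
have Ss : size s = k := cf.
pose x := nth 0%N s 0; pose y := nth 0%N s 1.
have xs : x \in s by apply: mem_nth; rewrite Ss; lia.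
have ys : y \in s by apply: mem_nth; rewrite Ss; lia.
have xy : x != y by rewrite /x /y nth_uniq ?Ss //; lia.
have xn : x \in verts H by rewrite mem_verts; apply: (vlt Hu hf).
have yn : y \in verts H by rewrite mem_verts; apply: (vlt Hu hf).
have hfe : f \in hedges H by [].
have hN : (f, None) \in lifte (hedges H) eopts by rewrite mem_lifte hfe /os inE.
have hS : (f, Some x) \in lifte (hedges H) eopts.
  by rewrite mem_lifte hfe /os inE /= mem_map //; apply: Some_inj.
rewrite (pth_step Hu) /pth.
apply: leq_trans (leq_sum_term _ (_ : (x, false) \in liftv (verts H))); last by rewrite mem_liftv.
apply: leq_trans (leq_sum_term _ hN).
apply: leq_trans (leq_sum_term _ (_ : (y, false) \in liftv (verts H))); last by rewrite mem_liftv.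
apply: leq_trans (leq_sum_term _ hS).
apply: leq_trans (leq_sum_term _ (_ : (x, true) \in liftv (verts H))); last by rewrite mem_liftv.
rewrite /memL /= -/s xs ys !inE !xpair_eqE !eqSome /= !eqxx (negbTE xy) /=.
by case: (y == x).
Qed.

Lemma pos_tri : (2 < k)%N -> (0 < ntriangles (ilth_step H))%N.
Proof.
move=> hk3.
have [f hf] := exists_edge.
have [cf hl] := Hu hf.
set s := eopts f.
have Us : uniq s := fset_uniq _.
have Ss : size s = k := cf.
pose x := nth 0%N s 0; pose y := nth 0%N s 1; pose z := nth 0%N s 2.
have xs : x \in s by apply: mem_nth; rewrite Ss; lia.
have ys : y \in s by apply: mem_nth; rewrite Ss; lia.
have zs : z \in s by apply: mem_nth; rewrite Ss; lia.
have xy : x != y by rewrite /x /y nth_uniq ?Ss //; lia.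
have xz : x != z by rewrite /x /z nth_uniq ?Ss //; lia.
have yz : y != z by rewrite /y /z nth_uniq ?Ss //; lia.
have xn : x \in verts H by rewrite mem_verts; apply: (vlt Hu hf).
have yn : y \in verts H by rewrite mem_verts; apply: (vlt Hu hf).
have zn : z \in verts H by rewrite mem_verts; apply: (vlt Hu hf).
have hfe : f \in hedges H by [].
have hN : (f, None) \in lifte (hedges H) eopts by rewrite mem_lifte hfe /os inE.
have hSx : (f, Some x) \in lifte (hedges H) eopts.
  by rewrite mem_lifte hfe /os inE /= mem_map //; apply: Some_inj.
have hSy : (f, Some y) \in lifte (hedges H) eopts.
  by rewrite mem_lifte hfe /os inE /= mem_map //; apply: Some_inj.
rewrite (tri_step Hu) /tri.
apply: leq_trans (leq_sum_term _ (_ : (x, false) \in liftv (verts H))); last by rewrite mem_liftv.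
apply: leq_trans (leq_sum_term _ hN).
apply: leq_trans (leq_sum_term _ (_ : (y, false) \in liftv (verts H))); last by rewrite mem_liftv.
apply: leq_trans (leq_sum_term _ hSx).
apply: leq_trans (leq_sum_term _ (_ : (z, false) \in liftv (verts H))); last by rewrite mem_liftv.
apply: leq_trans (leq_sum_term _ hSy).
rewrite /memL /= -/s xs ys zs !inE !xpair_eqE !eqSome /= !eqxx (negbTE xy) (negbTE xz) (negbTE yz) /=.
by rewrite eq_sym xy.
Qed.
End Pos.

Unset Implicit Arguments.

Import Order.TTheory GRing.Theory Num.Theory.

Lemma main_nat (k : nat) (H0 : hgraph) :
  (2 <= k)%N -> uniform k H0 -> edges H0 != fset0 ->
  (2 < k \/ 0 < ntriangles H0)%N ->
  exists (N1 D1 N2 D2 : nat), [/\ (0 < N1)%N, (0 < D1)%N, (0 < N2)%N, (0 < D2)%N &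
    forall s, let t := s.+1 in
      [/\ (0 < npaths2 (ilth H0 t))%N,
          (N1 * aT k ^ t * npaths2 (ilth H0 t) <= (6 * ntriangles (ilth H0 t)) * (D1 * bP k ^ t))%N
        & ((6 * ntriangles (ilth H0 t)) * (D2 * bP k ^ t) <= (N2 * aT k ^ t) * npaths2 (ilth H0 t))%N]].
Proof.
move=> hk Hu0 Hne Htri.
pose T t := ntriangles (ilth H0 t).
pose P t := npaths2 (ilth H0 t).
pose S t := sqH (ilth H0 t).
have Hu : forall t, uniform k (ilth H0 t).
  by elim => [|t IH] //; exact: (uniform_step IH).
pose a := aT k; pose b := bP k; pose rho := rS k.
pose C1 := (CT k * (k + k + k))%N; pose C2 := (CP k * (1 + k))%N.
have hS : forall t, (S t.+1 <= rho * S t)%N by move=> t; exact: (stepS_hi (Hu t)).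
have hT : forall t, (T t.+1 <= a * T t + C1 * S t)%N.
  move=> t; apply: leq_trans (stepT_hi (Hu t)) _.
  by rewrite /C1 -/(S t) -/(T t); apply: eq_leq; ring.
have hP : forall t, (P t.+1 <= b * P t + C2 * S t)%N.
  move=> t; apply: leq_trans (stepP_hi (Hu t)) _.
  by rewrite /C2 -/(S t) -/(P t); apply: eq_leq; ring.
have hTl : forall t, (a * T t <= T t.+1)%N by move=> t; exact: (stepT_lo (Hu t)).
have hPl : forall t, (b * P t <= P t.+1)%N by move=> t; exact: (stepP_lo (Hu t)).
have ra : (rho < a)%N := rS_lt_aT k.
have rb : (rho < b)%N := rS_lt_bP k.
pose Phi := ((a - rho) * T 0 + C1 * S 0).+1.
pose Psi := ((b - rho) * P 0 + C2 * S 0).+1.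
have upT : forall t, ((a - rho) * T t <= a ^ t * Phi)%N.
  move=> t; apply: leq_trans (leq_addr (C1 * S t) _) _.
  apply: leq_trans (potential (ltnW ra) hS hT t) _.
  by rewrite leq_mul2l leqnSn orbT.
have upP : forall t, ((b - rho) * P t <= b ^ t * Psi)%N.
  move=> t; apply: leq_trans (leq_addr (C2 * S t) _) _.
  apply: leq_trans (potential (ltnW rb) hS hP t) _.
  by rewrite leq_mul2l leqnSn orbT.
have P1 : (0 < P 1)%N := pos_paths hk Hu0 Hne.
have T1 : (0 < T 1)%N.
  case: Htri => [h3|h0]; first exact: (pos_tri hk Hu0 Hne h3).
  apply: leq_trans (hTl 0); rewrite muln_gt0 h0 andbT /a.
  by apply: leq_ltn_trans ra.
have loT : forall s, (a ^ s * T 1 <= T s.+1)%N.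
  by move=> s; have := iter_lo hTl s 1; rewrite addn1.
have loP : forall s, (b ^ s * P 1 <= P s.+1)%N.
  by move=> s; have := iter_lo hPl s 1; rewrite addn1.
have a0 : (0 < a)%N by apply: leq_ltn_trans ra.
have b0 : (0 < b)%N by apply: leq_ltn_trans rb.
exists (6 * T 1 * (b - rho))%N, (a * Psi)%N, (6 * Phi * b)%N, ((a - rho) * P 1)%N.
split.
- by rewrite !muln_gt0 T1 subn_gt0 rb.
- by rewrite muln_gt0 a0.
- by rewrite !muln_gt0 b0.
- by rewrite muln_gt0 subn_gt0 ra P1.
move=> s t; split.
- apply: leq_trans (loP s); by rewrite muln_gt0 expn_gt0 b0 P1.
- rewrite -/(T t) -/(P t) /t expnS.
  have e1 : (6 * T 1 * (b - rho) * (a * a ^ s) * P s.+1 =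
     6 * a * (a ^ s * T 1) * ((b - rho) * P s.+1))%N by ring.
  have e2 : (6 * T s.+1 * (a * Psi * b ^ s.+1) = 6 * a * T s.+1 * (b ^ s.+1 * Psi))%N by ring.
  rewrite e1 e2; apply: leq_mul; first by rewrite leq_mul2l loT orbT.
  exact: upP.
- rewrite -/(T t) -/(P t) /t (expnS b).
  have e1 : (6 * T s.+1 * ((a - rho) * P 1 * (b * b ^ s)) =
     6 * ((a - rho) * T s.+1) * (b * (b ^ s * P 1)))%N by ring.
  have e2 : (6 * Phi * b * a ^ s.+1 * P s.+1 = 6 * (a ^ s.+1 * Phi) * (b * P s.+1))%N by ring.
  rewrite e1 e2; apply: leq_mul; first by rewrite leq_mul2l upT orbT.
  by rewrite leq_mul2l loP orbT.
Qed.

Import Order.TTheory GRing.Theory Num.Theory.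

Theorem theorem4p1 (k : nat) (H0 : hgraph) :
  (2 <= k)%N -> uniform k H0 -> edges H0 != fset0 ->
  (2 < k \/ 0 < ntriangles H0)%N ->
  let r : rat := ((((k - 1) ^ 3 + 3 * (k - 1))%N)%:R / ((k ^ 2 + 1)%N)%:R)%R in
  exists (c1 c2 : rat) (T : nat), (0 < c1)%R /\ (0 < c2)%R /\
    forall t : nat, (T <= t)%N ->
      (c1 * r ^+ t <= HC1 (ilth H0 t) <= c2 * r ^+ t)%R.
Proof.
move=> hk Hu Hne Htri r.
have [N1 [D1 [N2 [D2 [n1 d1 n2 d2 H]]]]] := @main_nat k H0 hk Hu Hne Htri.
exists (N1%:R / D1%:R)%R, (N2%:R / D2%:R)%R, 1%N.
split; first by rewrite divr_gt0 ?ltr0n.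
split; first by rewrite divr_gt0 ?ltr0n.
case => [|s] // _.
have [hp hlo hhi] := H s.
have b0 : (0 < bP k)%N by rewrite /bP addn2.
have er : (r ^+ s.+1 = ((aT k ^ s.+1)%N)%:R / ((bP k ^ s.+1)%N)%:R)%R.
  by rewrite /r -aT_eq // -bP_eq // expr_div_n !natrX.
rewrite er !mulf_div -!natrM /HC1; apply/andP; split; apply: frac_le => //.
- by rewrite muln_gt0 d1 expn_gt0 b0.
- by rewrite muln_gt0 d2 expn_gt0 b0.
Qed.
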